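(* Let $\mathsf{\Sigma}\in\mathbb{R}^{N\times N_S}$ and $\mathsf{\Lambda}\in\mathbb{R}^{N\times N_L}$ be the Star-to-RWG and Loop-to-RWG matrices of a triangular surface mesh, and let $\mathsf{\Sigma}_n=\mathsf{\Sigma}(\mathsf{\Sigma}^{\mathrm T}\mathsf{\Sigma})^+(\mathsf{\Sigma}^{\mathrm T}\mathsf{\Sigma})_n$ and $\mathsf{\Lambda}_n=\mathsf{\Lambda}(\mathsf{\Lambda}^{\mathrm T}\mathsf{\Lambda})^+(\mathsf{\Lambda}^{\mathrm T}\mathsf{\Lambda})_n$ be the filtered Star and Loop matrices (see context). Then for integers $1\le m<n<p<q\le N_S$, $$(\mathsf{\Sigma}_m-\mathsf{\Sigma}_n)^{\mathrm T}(\mathsf{\Sigma}_p-\mathsf{\Sigma}_q)=\mathsf{0},$$ and for integers $1\le m<n<p<q\le N_L$, $$(\mathsf{\Lambda}_m-\mathsf{\Lambda}_n)^{\mathrm T}(\mathsf{\Lambda}_p-\mathsf{\Lambda}_q)=\mathsf{0}.$$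
   Context: Consider a closed triangulated surface with $N$ edges, $N_S$ triangles and $N_L$ vertices. Each edge $m$ is shared by two triangles $c_m^+$, $c_m^-$. $[\mathsf{\Sigma}]_{mn}=1$ if cell $n$ is $c_m^+$, $-1$ if cell $n$ is $c_m^-$, $0$ otherwise. $[\mathsf{\Lambda}]_{mn}=\pm1$ when vertex $n$ is an endpoint of edge $m$ (opposite signs for the two endpoints, fixed by the orientation convention), $0$ otherwise. $^+$ denotes the Moore–Penrose pseudo-inverse. For $\mathsf{X}\in\{\mathsf{\Sigma},\mathsf{\Lambda}\}$ with $N_x$ columns, fix an SVD $\mathsf{X}=\mathsf{U}_X\mathsf{S}_X\mathsf{V}_X^{\mathrm T}$ with $\mathsf{V}_X$ orthogonal $N_x\times N_x$ and singular values $\sigma_{X,1}\ge\dots\ge\sigma_{X,N_x}\ge0$, so $\mathsf{X}^{\mathrm T}\mathsf{X}=\mathsf{V}_X\mathrm{diag}(\sigma_{X,i}^2)\mathsf{V}_X^{\mathrm T}$. For $1\le n\le N_x$, $\mathsf{L}_{X,n}$ is diagonal with $[\mathsf{L}_{X,n}]_{ii}=\sigma_{X,i}$ if $i>N_x-n$ and $0$ otherwise, and $(\mathsf{X}^{\mathrm T}\mathsf{X})_n=\mathsf{V}_X\mathsf{L}_{X,n}^2\mathsf{V}_X^{\mathrm T}$. *)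

(* Defs.v *)
From HB Require Import structures.
From mathcomp Require Import all_boot all_order all_algebra.
From mathcomp Require Import reals.
Set Implicit Arguments. Unset Strict Implicit. Unset Printing Implicit Defensive.
Import Order.TTheory GRing.Theory Num.Theory.
Local Open Scope ring_scope.

(* Combinatorial data of a triangulated surface with N edges (RWG functions),
   NS triangles (cells / stars) and NL vertices (loops).  Edge m is shared by
   the two triangles c_plus m, c_minus m, and has endpoints v_plus m, v_minus m
   (the orientation convention fixes which endpoint gets +1). *)
Record mesh (N NS NL : nat) := Mesh {
  c_plus : 'I_N -> 'I_NS;
  c_minus : 'I_N -> 'I_NS;
  v_plus : 'I_N -> 'I_NL;
  v_minus : 'I_N -> 'I_NL }.

Definition cell_edges N NS NL (M : mesh N NS NL) (c : 'I_NS) : {set 'I_N} :=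
  [set e | (c_plus M e == c) || (c_minus M e == c)].

Definition edge_verts N NS NL (M : mesh N NS NL) (e : 'I_N) : {set 'I_NL} :=
  [set v_plus M e; v_minus M e].

Definition closed_tri_surface N NS NL (M : mesh N NS NL) : Prop :=
  [/\ (forall e, c_plus M e != c_minus M e),
      (forall e, v_plus M e != v_minus M e),
      (forall e e', e != e' -> edge_verts M e != edge_verts M e'),
      (forall c, #|cell_edges M c| = 3%N /\
                 #|\bigcup_(e in cell_edges M c) edge_verts M e| = 3%N) &
      (forall v, exists e, v \in edge_verts M e)].

Definition StarMx (R : realType) N NS NL (M : mesh N NS NL) : 'M[R]_(N, NS) :=
  \matrix_(m < N, n < NS)
    (if n == c_plus M m then 1 else if n == c_minus M m then -1 else 0).

Definition LoopMx (R : realType) N NS NL (M : mesh N NS NL) : 'M[R]_(N, NL) :=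
  \matrix_(m < N, n < NL)
    (if n == v_plus M m then 1 else if n == v_minus M m then -1 else 0).

(* Moore-Penrose pseudo-inverse, characterised by the Penrose equations
   (which determine it uniquely). *)
Definition is_pinv (R : realType) k (A P : 'M[R]_k) : Prop :=
  [/\ A *m P *m A = A, P *m A *m P = P,
      (A *m P)^T = A *m P & (P *m A)^T = P *m A].

Definition is_svd (R : realType) N Nx (X : 'M[R]_(N, Nx))
    (V : 'M[R]_Nx) (sigma : 'I_Nx -> R) : Prop :=
  [/\ V^T *m V = 1%:M,
      (forall i j : 'I_Nx, (i <= j)%N -> sigma j <= sigma i),
      (forall i, 0 <= sigma i) &
      exists U : 'M[R]_N, U^T *m U = 1%:M /\
        X = U *m (\matrix_(i < N, j < Nx) (if (i : nat) == j then sigma j else 0))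
              *m V^T].

(* L_{X,n}: diagonal, [L]_ii = sigma_i if i > Nx - n (1-based i), else 0 *)
Definition Lmx (R : realType) Nx (sigma : 'I_Nx -> R) (n : nat) : 'M[R]_Nx :=
  diag_mx (\row_(i < Nx) (if (Nx - n < i.+1)%N then sigma i else 0)).

Definition gram_trunc (R : realType) Nx (V : 'M[R]_Nx) (sigma : 'I_Nx -> R)
    (n : nat) : 'M[R]_Nx :=
  V *m (Lmx sigma n *m Lmx sigma n) *m V^T.

(* filtered matrix X_n = X (X^T X)^+ (X^T X)_n, with P = (X^T X)^+ *)
Definition filtered (R : realType) N Nx (X : 'M[R]_(N, Nx)) (P : 'M[R]_Nx)
    (V : 'M[R]_Nx) (sigma : 'I_Nx -> R) (n : nat) : 'M[R]_(N, Nx) :=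
  X *m P *m gram_trunc V sigma n.

(* Main.v *)
Require Import Defs.
From HB Require Import structures.
From mathcomp Require Import all_boot all_order all_algebra.
From mathcomp Require Import reals.
From mathcomp Require Import zify.
Import Order.TTheory GRing.Theory Num.Theory.
Local Open Scope ring_scope.

Section Gen.
Variable R : realType.

Lemma mydiagr k (A E : 'M[R]_k) i j :
  (forall a b, a != b -> E a b = 0) -> (A *m E) i j = A i j * E j j.
Proof.
move=> Ed; rewrite !mxE (bigD1 j) //= big1 ?addr0 // => l /negbTE lj.
by rewrite Ed ?mulr0 // lj.
Qed.

Lemma mydiagl k (A E : 'M[R]_k) i j :
  (forall a b, a != b -> E a b = 0) -> (E *m A) i j = E i i * A i j.
Proof.
move=> Ed; rewrite !mxE (bigD1 i) //= big1 ?addr0 // => l /negbTE lj.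
by rewrite Ed ?mul0r // eq_sym lj.
Qed.

Lemma key N Nx (X : 'M[R]_(N, Nx)) V sigma P (m n p q : nat) :
  is_svd X V sigma -> is_pinv (X^T *m X) P ->
  (m < n)%N -> (n < p)%N -> (p < q)%N ->
  (filtered X P V sigma m - filtered X P V sigma n)^T
    *m (filtered X P V sigma p - filtered X P V sigma q) = 0.
Proof.
move=> [VV _ _ [U [UU HX]]] [G1 G2 G3 G4] mn np pq.
set S := \matrix_(i < N, j < Nx) _ in HX.
have VV' : V *m V^T = 1%:M by apply: mulmx1C.
set E := S^T *m S.
have Ed : forall a b, a != b -> E a b = 0.
  move=> a b ab; rewrite !mxE big1 // => k _; rewrite !mxE.
  case: eqP => [ka|]; case: eqP => [kb|]; rewrite ?mul0r ?mulr0 //.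
  by move: ab; rewrite -(inj_eq val_inj) /= -ka -kb eqxx.
have HG : X^T *m X = V *m E *m V^T.
  rewrite HX !trmx_mul trmxK !mulmxA -[V *m S^T *m U^T *m U]mulmxA UU mulmx1.
  by [].
set Q := V^T *m P *m V.
have HP : P = V *m Q *m V^T.
  by rewrite /Q !mulmxA VV' mul1mx -mulmxA VV' mulmx1.
clearbody Q.
have canc : forall A B : 'M[R]_Nx, V *m A *m V^T = V *m B *m V^T -> A = B.
  move=> A B h; have := congr1 (fun C => V^T *m C *m V) h.
  by rewrite /= !mulmxA VV !mul1mx -!mulmxA VV !mulmx1.
have simpV : forall A B : 'M[R]_Nx,
    V *m A *m V^T *m (V *m B *m V^T) = V *m (A *m B) *m V^T.
  by move=> A B; rewrite !mulmxA -[V *m A *m V^T *m V]mulmxA VV mulmx1.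
have trV : forall A : 'M[R]_Nx, (V *m A *m V^T)^T = V *m A^T *m V^T.
  by move=> A; rewrite !trmx_mul trmxK mulmxA.
rewrite HG HP in G1 G2 G3 G4.
rewrite !simpV in G1 G2 G3 G4.
rewrite !trV in G3 G4.
move/canc: G1 => EQE; move/canc: G2 => QEQ; move/canc: G3 => S1; move/canc: G4 => S2.
have Qd : forall a b, a != b -> Q a b = 0.
  move=> a b ab.
  have h1 : Q a b = E a a * \sum_k Q k a * Q k b.
    rewrite -{1}QEQ mxE mulr_sumr; apply: eq_bigr => k _.
    by rewrite -S2 mxE mydiagr // mulrA [E a a * _]mulrC.
  have h2 : Q a b = E b b * \sum_k Q a k * Q b k.
    rewrite -{1}QEQ -mulmxA mxE mulr_sumr; apply: eq_bigr => k _.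
    by rewrite -S1 [(E *m Q)^T k b]mxE mydiagl // mulrCA.
  have h3 : E a a * Q a b * E b b = 0.
    by rewrite -(Ed a b ab) -[in X in _ = X]EQE (mydiagr _ (E *m Q)) // (mydiagl _ Q).
  have [ea|ea] := eqVneq (E a a) 0; first by rewrite h1 ea mul0r.
  have [eb|eb] := eqVneq (E b b) 0; first by rewrite h2 eb mul0r.
  by move/eqP: h3; rewrite !mulf_eq0 (negbTE ea) (negbTE eb) orbF => /eqP.
have QT : Q^T = Q.
  apply/matrixP => a b; rewrite mxE.
  by case: (eqVneq a b) => [->//|ab]; rewrite !Qd // eq_sym.
have PV : forall D, filtered X P V sigma D = X *m V *m (Q *m (Lmx sigma D *m Lmx sigma D)) *m V^T.
  move=> D; rewrite /filtered /gram_trunc HP.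
  by rewrite !mulmxA -[X *m V *m Q *m V^T *m V]mulmxA VV mulmx1.
have DD : forall k, Lmx sigma k *m Lmx sigma k =
    diag_mx (\row_i (if (Nx - k < i.+1)%N then sigma i ^+ 2 else 0)).
  move=> k; rewrite /Lmx mulmx_diag; congr diag_mx; apply/rowP => i.
  by rewrite !mxE; case: ifP; rewrite ?mulr0 // expr2.
rewrite !PV !DD -!mulmxBl -!mulmxBr.
have FE : (X *m V)^T *m (X *m V) = E.
  rewrite trmx_mul -mulmxA [X^T *m (X *m V)]mulmxA HG !mulmxA VV mul1mx -mulmxA VV mulmx1 //.
move: (X *m V) FE => F FE.
rewrite !trmx_mul !trmxK !mulmxA.
set a := diag_mx _. set b := diag_mx _. set c := diag_mx _. set d := diag_mx _.
have -> : V *m (a - b)^T *m Q^T *m F^T *m F *m Q *m (c - d) *m V^T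
   = V *m ((a - b)^T *m Q *m (c - d)) *m V^T.
  rewrite QT -[V *m (a - b)^T *m Q *m F^T *m F]mulmxA FE.
  rewrite -[V *m (a - b)^T *m Q *m E *m Q]mulmxA -[(V *m (a - b)^T) *m Q *m (E *m Q)]mulmxA.
  by rewrite [Q *m (E *m Q)]mulmxA QEQ !mulmxA.
have -> : (a - b)^T *m Q *m (c - d) = 0; last by rewrite mulmx0 mul0mx.
rewrite /a /b /c /d -!raddfB /= tr_diag_mx mul_diag_mx mul_mx_diag.
apply/matrixP => i j; rewrite !mxE.
case: (eqVneq i j) => [<-|ij]; last by rewrite Qd // mulr0 mul0r.
case: ifP => h1; case: ifP => h2; case: ifP => h3; case: ifP => h4;
  rewrite ?subrr ?subr0 ?sub0r ?mulr0 ?mul0r //; exfalso; lia.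
Qed.
End Gen.

Theorem mainTheorem3 (R : realType) (N NS NL : nat) (M : mesh N NS NL)
  (HM : closed_tri_surface M)
  (VS : 'M[R]_NS) (sS : 'I_NS -> R) (PS : 'M[R]_NS)
  (VL : 'M[R]_NL) (sL : 'I_NL -> R) (PL : 'M[R]_NL) :
  is_svd (StarMx R M) VS sS ->
  is_pinv ((StarMx R M)^T *m StarMx R M) PS ->
  is_svd (LoopMx R M) VL sL ->
  is_pinv ((LoopMx R M)^T *m LoopMx R M) PL ->
  (forall m n p q : nat, (1 <= m)%N -> (m < n)%N -> (n < p)%N -> (p < q)%N ->
     (q <= NS)%N ->
     (filtered (StarMx R M) PS VS sS m - filtered (StarMx R M) PS VS sS n)^T
       *m (filtered (StarMx R M) PS VS sS p - filtered (StarMx R M) PS VS sS q)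
     = 0) /\
  (forall m n p q : nat, (1 <= m)%N -> (m < n)%N -> (n < p)%N -> (p < q)%N ->
     (q <= NL)%N ->
     (filtered (LoopMx R M) PL VL sL m - filtered (LoopMx R M) PL VL sL n)^T
       *m (filtered (LoopMx R M) PL VL sL p - filtered (LoopMx R M) PL VL sL q)
     = 0).
Proof.
move=> h1 h2 h3 h4; split => m n p q _ mn np pq _; exact: key.
Qed.
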